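(* Let $q\ge1$ and $t$ be integers with $0\le t<q$, and let $\mathcal{C}_{q,t}^{\mathrm{base}}=\bigcup_{i=0}^{\lfloor (q-t-1)/(t+1)\rfloor}\mathcal{S}_{q-t-i(t+1)}^q.$ If $q\equiv 0\pmod{t+1}$, then $\big(\mathcal{S}_{\mathrm{ins}}^t(\mathcal{C}_{q,t}^{\mathrm{base}})\big)_1$ is an optimal $t$-tail-deletion-correcting code, i.e. it is $t$-tail-deletion-correcting and $\mathsf{DEL}_{\mathrm{cor}}(q,t)=\big|\big(\mathcal{S}_{\mathrm{ins}}^t(\mathcal{C}_{q,t}^{\mathrm{base}})\big)_1\big|=|\mathcal{C}_{q,t}^{\mathrm{base}}|.$ If $q\not\equiv 0\pmod{t+1}$, then $\big(\mathcal{S}_{\mathrm{ins}}^t(\mathcal{C}_{q,t}^{\mathrm{base}})\big)_1\cup\mathcal{S}_1^q$ is an optimal $t$-tail-deletion-correcting code, i.e. it is $t$-tail-deletion-correcting and $\mathsf{DEL}_{\mathrm{cor}}(q,t)=|\mathcal{C}_{q,t}^{\mathrm{base}}|+q.$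
   Context: Let $[q]=\{0,1,\dots,q-1\}$. For $1\le m\le q$, a partial permutation of length $m$ over $[q]$ is a sequence $\pi=(\pi_1,\dots,\pi_m)$ of $m$ pairwise distinct elements of $[q]$; $|\pi|=m$. Let $\mathcal{S}_m^q$ be the set of those of length $m$ (so $\mathcal{S}_1^q$ consists of the $q$ single-symbol sequences) and $\mathcal{S}_{\mathrm{all}}^q=\bigcup_{m=1}^{q}\mathcal{S}_m^q$. A code is any subset of $\mathcal{S}_{\mathrm{all}}^q$. Juxtaposition $\omega\pi$ denotes concatenation with $\omega$ on the left. For $\pi$ of length $m$ and integer $j\ge 0$, $\pi_{\downarrow j}=(\pi_{k+1},\dots,\pi_m)$ with $k=\min(j,m-1)$ (leftmost symbols are deleted; the last symbol is never deleted); $\mathcal{B}_{\mathrm{del}}^t(\pi)=\{\pi_{\downarrow j}:0\le j\le t\}$. A code $\mathcal{C}$ is $t$-tail-deletion-correcting if $\mathcal{B}_{\mathrm{del}}^t(\pi_1)\cap\mathcal{B}_{\mathrm{del}}^t(\pi_2)=\emptyset$ for all distinct $\pi_1,\pi_2\in\mathcal{C}$; $\mathsf{DEL}_{\mathrm{cor}}(q,t)$ is the maximum size of such a code in $\mathcal{S}_{\mathrm{all}}^q$. For $\pi\in\mathcal{S}_{\mathrm{all}}^q$, $\mathcal{S}_{\mathrm{ins}}^t(\pi)$ is the set of all $\omega\pi\in\mathcal{S}_{\mathrm{all}}^q$ with $\omega$ a sequence of exactly $t$ elements of $[q]$ (entries of $\omega\pi$ pairwise distinct). Its elements are listed in increasing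 lexicographic order and $(\mathcal{S}_{\mathrm{ins}}^t(\pi))_1$ denotes the first one. For a code $\mathcal{C}$, $(\mathcal{S}_{\mathrm{ins}}^t(\mathcal{C}))_1=\{(\mathcal{S}_{\mathrm{ins}}^t(\pi))_1:\pi\in\mathcal{C}\}$. *)

(* Defs.v *)
From mathcomp Require Import all_boot.
Set Implicit Arguments. Unset Strict Implicit. Unset Printing Implicit Defensive.

Definition pp_enum (q : nat) : seq (seq 'I_q) :=
  [seq s <- flatten [seq [seq tval w | w : m.-tuple 'I_q] | m <- iota 1 q]
   | uniq s].

Definition PP (q : nat) : Type := seq_sub (pp_enum q).

Definition S_len (q m : nat) : {set PP q} := [set p : PP q | size (val p) == m].

Definition del_tail {q} (j : nat) (p : seq 'I_q) : seq 'I_q :=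
  drop (minn j (size p).-1) p.

Definition ball_del {q} (t : nat) (p : seq 'I_q) : seq (seq 'I_q) :=
  [seq del_tail j p | j <- iota 0 t.+1].

Definition tdc {q} (t : nat) (C : {set PP q}) : bool :=
  [forall p1 in C, forall p2 in C,
     (p1 != p2) ==> ~~ has (fun s => s \in ball_del t (val p2)) (ball_del t (val p1))].

Definition DEL_cor (q t : nat) : nat := \max_(C : {set PP q} | tdc t C) #|C|.

Definition S_ins {q} (t : nat) (p : PP q) : {set PP q} :=
  [set x : PP q | [exists w : t.-tuple 'I_q, val x == tval w ++ val p]].

Fixpoint lex_le (s1 s2 : seq nat) : bool :=
  match s1, s2 with
  | [::], _ => true
  | _ :: _, [::] => false
  | x :: s, y :: s' => (x < y) || ((x == y) && lex_le s s')
  end.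

Definition lexle {q} (x y : PP q) : bool :=
  lex_le (map val (val x)) (map val (val y)).

Definition is_first_ins {q} (t : nat) (p x : PP q) : bool :=
  (x \in S_ins t p) && [forall y in S_ins t p, lexle x y].

Definition ins_first {q} (t : nat) (C : {set PP q}) : {set PP q} :=
  [set x : PP q | [exists p in C, is_first_ins t p x]].

Definition C_base (q t : nat) : {set PP q} :=
  [set p : PP q | [exists i : 'I_((q - t - 1) %/ t.+1).+1,
                    size (val p) == q - t - i * t.+1]].

(* Main.v *)
Require Import Defs.
From mathcomp Require Import all_boot.
From mathcomp Require Import zify.
Set Implicit Arguments. Unset Strict Implicit.

Lemma ppP q (s : seq 'I_q) :
  (s \in pp_enum q) = [&& uniq s, 0 < size s & size s <= q].
Proof.
rewrite /pp_enum mem_filter.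
case Us: (uniq s) => //=.
apply/flatten_mapP/idP.
- case=> m; rewrite mem_iota => /andP[m1 mq] /imageP [w _ ->].
  rewrite size_tuple; apply/andP; split; lia.
- move=> /andP[s1 sq]; exists (size s); first by rewrite mem_iota; lia.
  exact: (@image_f _ _ (fun w : (size s).-tuple 'I_q => tval w) _ (in_tuple s)).
Qed.

Lemma ppv q (p : PP q) : [&& uniq (val p), 0 < size (val p) & size (val p) <= q].
Proof. rewrite -ppP; exact: ssvalP. Qed.

Lemma ballP q t (s x : seq 'I_q) : s \in ball_del t x ->
  exists2 j, j <= t & s = drop (minn j (size x).-1) x.
Proof. by case/mapP=> j; rewrite mem_iota /del_tail => /andP[_ jt] ->; exists j. Qed.

Lemma ball_in q t (x : seq 'I_q) j : j <= t -> del_tail j x \in ball_del t x.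
Proof. move=> jt; apply/mapP; exists j => //; rewrite mem_iota; lia. Qed.

Lemma tdc_intro q t (C : {set PP q}) :
  (forall x y, x \in C -> y \in C -> forall s, s \in ball_del t (val x) ->
     s \in ball_del t (val y) -> x = y) -> tdc t C.
Proof.
move=> H; apply/forallP=> x; apply/implyP=> xC; apply/forallP=> y; apply/implyP=> yC.
apply/implyP=> nxy; apply/hasPn=> s sx; apply/negP=> sy.
by move/eqP: nxy; apply; apply: H sx sy.
Qed.

Lemma tdc_elim q t (C : {set PP q}) x y s : tdc t C -> x \in C -> y \in C ->
  s \in ball_del t (val x) -> s \in ball_del t (val y) -> x = y.
Proof.
move=> /forallP /(_ x) /implyP H xC yC.
move: (H xC) => /forallP /(_ y) /implyP /(_ yC) H2 sx sy.
apply/eqP; apply/negPn/negP => nxy.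
by move: (implyP H2 nxy) => /hasPn /(_ s sx); rewrite sy.
Qed.

Lemma lex_refl s : lex_le s s.
Proof. by elim: s => //= x s ->; rewrite eqxx orbT. Qed.

Lemma lex_total a b : lex_le a b || lex_le b a.
Proof.
elim: a b => [|x a IH] [|y b] //=.
case: (ltngtP x y) => //= <-; rewrite eqxx /=; exact: IH.
Qed.

Lemma lex_trans b a c : lex_le a b -> lex_le b c -> lex_le a c.
Proof.
elim: a b c => [|x a IH] [|y b] [|z c] //=.
case/orP=> [xy|/andP[/eqP <- ab]]; case/orP=> [yz|/andP[/eqP <- bc]].
- by rewrite (ltn_trans xy yz).
- by rewrite xy.
- by rewrite yz.
- by rewrite eqxx (IH _ _ ab bc) orbT.
Qed.

Lemma lex_anti a b : lex_le a b -> lex_le b a -> a = b.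
Proof.
elim: a b => [|x a IH] [|y b] //=.
case: (ltngtP x y) => //= <- ab ba; by rewrite (IH _ ab ba).
Qed.

Lemma lexle_anti q (x y : PP q) : lexle x y -> lexle y x -> x = y.
Proof.
rewrite /lexle => h1 h2; apply: val_inj; apply: (inj_map val_inj); exact: lex_anti.
Qed.

Lemma exists_min q (s : seq (PP q)) : s != [::] ->
  exists2 x, x \in s & forall y, y \in s -> lexle x y.
Proof.
elim: s => // a s IH _.
case: (eqVneq s [::]) => [->|sn].
  exists a; first by rewrite mem_head.
  by move=> y; rewrite inE => /eqP ->; apply: lex_refl.
case: (IH sn) => x xs xmin.
case: (boolP (lexle a x)) => ax.
- exists a; first exact: mem_head.
  move=> y; rewrite inE => /orP[/eqP->|ys]; first exact: lex_refl.
  exact: lex_trans ax (xmin _ ys).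
- exists x; first by rewrite inE xs orbT.
  move=> y; rewrite inE => /orP[/eqP->|ys]; last exact: xmin.
  move: (lex_total (map val (val a)) (map val (val x))).
  by rewrite /lexle in ax *; rewrite (negbTE ax).
Qed.

Lemma S_ins_nonempty q t (p : PP q) : t + size (val p) <= q ->
  exists x, x \in S_ins t p.
Proof.
move=> H.
set rest := [seq a <- enum 'I_q | a \notin val p].
have Hr : t <= size rest.
  have: size (enum 'I_q) <= size (rest ++ val p).
    apply: uniq_leq_size; first exact: enum_uniq.
    move=> a _; rewrite mem_cat mem_filter mem_enum andbT.
    by case: (a \in val p); rewrite ?orbT.
  rewrite size_enum_ord size_cat; lia.
have Hw : size (take t rest) == t by rewrite (size_takel Hr).
pose w : t.-tuple 'I_q := Tuple Hw.
have Hm : (tval w ++ val p) \in pp_enum q.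
  move: (ppv p) => /and3P [up p1 pq].
  rewrite ppP cat_uniq size_cat /= (size_takel Hr) up andbT.
  apply/and3P; split; [apply/andP; split| by rewrite addn_gt0 p1 orbT | exact: H].
  - by apply: take_uniq; rewrite filter_uniq // enum_uniq.
  - apply/hasPn => a ap; apply/negP => /mem_take; by rewrite mem_filter ap.
exists (SeqSub Hm); rewrite /S_ins inE; apply/existsP; exists w; by [].
Qed.

Definition Ffirst q t (p : PP q) : PP q := odflt p [pick x | is_first_ins t p x].

Lemma first_exists q t (p : PP q) : t + size (val p) <= q -> exists x, is_first_ins t p x.
Proof.
case/S_ins_nonempty => y yS.
have: enum (S_ins t p) != [::].
  by apply/eqP => E; move: (mem_enum (S_ins t p) y); rewrite E yS.
case/exists_min => x; rewrite mem_enum => xS xmin.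
exists x; rewrite /is_first_ins xS /=; apply/forallP => z; apply/implyP => zS.
by apply: xmin; rewrite mem_enum.
Qed.

Lemma FfirstP q t (p : PP q) : t + size (val p) <= q -> is_first_ins t p (Ffirst t p).
Proof.
move=> H; rewrite /Ffirst; case: pickP => [x //|none].
by case: (first_exists H) => x; rewrite none.
Qed.

Lemma first_uniq q t (p x y : PP q) : is_first_ins t p x -> is_first_ins t p y -> x = y.
Proof.
case/andP=> xS /forall_inP xm /andP[yS /forall_inP ym].
apply: lexle_anti; [exact: xm | exact: ym].
Qed.

Lemma first_val q t (p x : PP q) : is_first_ins t p x ->
  exists w : t.-tuple 'I_q, val x = tval w ++ val p.
Proof. by case/andP; rewrite /S_ins inE => /existsP [w /eqP]; exists w. Qed.

Lemma CbaseP q t (p : PP q) : p \in C_base q t ->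
  exists i, i * t.+1 <= q - t - 1 /\ size (val p) = q - t - i * t.+1.
Proof.
rewrite inE => /existsP [i /eqP E]; exists i; split => //.
by have := ltn_ord i; rewrite ltnS leq_divRL.
Qed.

Lemma CbaseI q t (p : PP q) i : i * t.+1 <= q - t - 1 ->
  size (val p) = q - t - i * t.+1 -> p \in C_base q t.
Proof.
move=> Hi E; rewrite inE; apply/existsP.
have Hi' : i < ((q - t - 1) %/ t.+1).+1 by rewrite ltnS leq_divRL.
by exists (Ordinal Hi'); rewrite E.
Qed.

Lemma insP q t (x : PP q) : x \in ins_first t (C_base q t) ->
  exists p i, [/\ is_first_ins t p x, i * t.+1 <= q - t - 1,
     size (val p) = q - t - i * t.+1, drop t (val x) = val p
   & size (val x) = t + size (val p)].
Proof.
rewrite /ins_first inE => /existsP [p /andP [pC fx]].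
case: (CbaseP pC) => i [hi sp].
case: (first_val fx) => w E.
exists p, i; split => //; rewrite E ?drop_size_cat ?size_cat ?size_tuple //.
Qed.

Lemma card_ins q t : t < q -> #|ins_first t (C_base q t)| = #|C_base q t|.
Proof.
move=> tq.
have Hs (p : PP q) : p \in C_base q t -> t + size (val p) <= q.
  by case/CbaseP => i [_ ->]; lia.
have -> : ins_first t (C_base q t) = [set Ffirst t p | p in C_base q t].
  apply/setP => x; rewrite /ins_first inE; apply/existsP/imsetP.
  - case=> p /andP[pC fx]; exists p => //; exact: first_uniq fx (FfirstP (Hs p pC)).
  - case=> p pC ->; exists p; rewrite pC; exact: FfirstP (Hs p pC).
apply: card_in_imset => p1 p2 p1C p2C E.
case: (first_val (FfirstP (Hs _ p1C))) => w1 E1.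
case: (first_val (FfirstP (Hs _ p2C))) => w2 E2.
apply: val_inj.
have: drop t (val (Ffirst t p1)) = drop t (val (Ffirst t p2)) by rewrite E.
by rewrite E1 E2 !drop_size_cat ?size_tuple.
Qed.

Lemma ins_ins q t (x y : PP q) s : t < q ->
  x \in ins_first t (C_base q t) -> y \in ins_first t (C_base q t) ->
  s \in ball_del t (val x) -> s \in ball_del t (val y) -> x = y.
Proof.
move=> tq /insP [p [i [fx hi sp dx sx]]] /insP [p' [i' [fy hi' sp' dy sy]]].
move=> /ballP [j jt ->] /ballP [j' j't E].
have Hs := congr1 size E; rewrite !size_drop in Hs.
rewrite sp in sx; rewrite sp' in sy; rewrite sx sy in Hs.
case: (ltngtP i i') => [lt|lt|eq].
- have : i.+1 * t.+1 <= i' * t.+1 by rewrite leq_mul2r lt orbT.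
  rewrite mulSn => ?; exfalso; lia.
- have : i'.+1 * t.+1 <= i * t.+1 by rewrite leq_mul2r lt orbT.
  rewrite mulSn => ?; exfalso; lia.
subst i'.
have ha : minn j (size (val x)).-1 = minn j' (size (val y)).-1 by lia.
have dd (u : seq 'I_q) a : a <= t -> drop t u = drop (t - a) (drop a u).
  by move=> ?; rewrite drop_drop subnK.
have : val p = val p'.
  rewrite -dx -dy (dd _ (minn j (size (val x)).-1)); last by lia.
  by rewrite E -ha -dd //; lia.
move/val_inj => pp'; subst p'.
exact: first_uniq fx fy.
Qed.

Lemma ins_S1 q t (x y : PP q) s : t < q -> ~~ (t.+1 %| q) ->
  x \in ins_first t (C_base q t) -> y \in S_len q 1 ->
  s \in ball_del t (val x) -> s \in ball_del t (val y) -> False.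
Proof.
move=> tq nd /insP [p [i [fx hi sp dx sx]]] yS /ballP [j jt ->] /ballP [j' _ E].
move: yS; rewrite /S_len inE => /eqP y1.
have Hs := congr1 size E; rewrite !size_drop y1 in Hs.
rewrite sx in Hs.
have sp2 : size (val p) != 1.
  apply/eqP => sp1; move/negP: nd; apply; apply/dvdnP; exists i.+1; rewrite mulSn; lia.
lia.
Qed.

Lemma S1_S1 q t (x y : PP q) s : x \in S_len q 1 -> y \in S_len q 1 ->
  s \in ball_del t (val x) -> s \in ball_del t (val y) -> x = y.
Proof.
rewrite /S_len !inE => /eqP x1 /eqP y1 /ballP [j _ ->] /ballP [j' _ E].
apply: val_inj; move: E; rewrite x1 y1 /= !minn0 !drop0 //.
Qed.

Lemma pp1 q (a : 'I_q) : [:: a] \in pp_enum q.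
Proof. rewrite ppP /=; have := ltn_ord a; lia. Qed.

Definition mk1 q (a : 'I_q) : PP q := SeqSub (pp1 a).

Lemma card_S1 q : #|S_len q 1| = q.
Proof.
have -> : S_len q 1 = [set mk1 a | a in 'I_q].
  apply/setP => p; rewrite /S_len inE; apply/eqP/imsetP.
  - case E: (val p) => [|a [|]] // _; exists a => //; apply: val_inj; by rewrite E.
  - by case=> a _ ->.
rewrite card_imset ?card_ord // => a b /(congr1 val) /= [] //.
Qed.

Definition sufl q t (m : nat) : nat :=
  if 0 < q - t - (q - m) %/ t.+1 * t.+1 then q - t - (q - m) %/ t.+1 * t.+1 else 1.

Lemma sufl_bounds q t m : 1 <= m <= q ->
  [/\ 1 <= sufl q t m, sufl q t m <= m & m - t <= sufl q t m].
Proof.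
move=> /andP[m1 mq]; rewrite /sufl.
have := divn_eq (q - m) t.+1; have := ltn_pmod (q - m) (ltn0Sn t).
move: ((q - m) %/ t.+1 * t.+1) ((q - m) %% t.+1) => a r rt E.
case: ifP => H; split; lia.
Qed.

Definition fsuf q t (p : PP q) : PP q :=
  insubd p (drop (size (val p) - sufl q t (size (val p))) (val p)).

Lemma fsufP q t (p : PP q) :
  [/\ val (fsuf t p) = drop (size (val p) - sufl q t (size (val p))) (val p),
      val (fsuf t p) \in ball_del t (val p)
    & size (val (fsuf t p)) = sufl q t (size (val p))].
Proof.
move: (ppv p) => /and3P [up p1 pq].
have [l1 lm ml] : [/\ 1 <= sufl q t (size (val p)), sufl q t (size (val p)) <= size (val p)
   & size (val p) - t <= sufl q t (size (val p))] by apply: sufl_bounds; rewrite p1 pq.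
have V : val (fsuf t p) = drop (size (val p) - sufl q t (size (val p))) (val p).
  rewrite /fsuf insubdK // ppP drop_uniq // size_drop.
  have key m l : 1 <= l -> l <= m -> m <= q -> 0 < m - (m - l) <= q.
    by move=> *; apply/andP; split; lia.
  exact: key.
split => //.
- rewrite V.
  have -> : drop (size (val p) - sufl q t (size (val p))) (val p)
      = del_tail (size (val p) - sufl q t (size (val p))) (val p).
    have k1 m l : 1 <= l -> l <= m -> minn (m - l) m.-1 = m - l by move=> *; lia.
    by rewrite /del_tail k1.
  apply: ball_in.
  have k2 m l : m - t <= l -> m - l <= t by move=> *; lia.
  exact: k2.
- rewrite V size_drop.
  have key m l : l <= m -> m - (m - l) = l by move=> *; lia.
  exact: key.
Qed.

Lemma upper q t (C : {set PP q}) : t < q -> tdc t C ->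
  #|C| <= #|C_base q t| + (if t.+1 %| q then 0 else q).
Proof.
move=> tq tC.
have inj : {in C &, injective (fsuf t)}.
  move=> p1 p2 p1C p2C E.
  have [_ b1 _] := fsufP t p1; have [_ b2 _] := fsufP t p2.
  apply: (tdc_elim tC p1C p2C b1); by rewrite E.
rewrite -(card_in_imset inj).
have sub : fsuf t @: C \subset C_base q t :|: (if t.+1 %| q then set0 else S_len q 1).
  apply/subsetP => y /imsetP [p pC ->].
  have [_ _ Hsz] := fsufP t p.
  move: (ppv p) => /and3P [_ m1 mq].
  rewrite in_setU; move: Hsz; rewrite /sufl.
  move: m1 mq; move: (size (val p)) => m m1 mq.
  have := divn_eq (q - m) t.+1; have := ltn_pmod (q - m) (ltn0Sn t).
  move: ((q - m) %/ t.+1) ((q - m) %% t.+1) => i r rt E.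
  case: ifP => Hl Hsz.
  - by rewrite (CbaseI (i := i)) //; lia.
  - case: ifP => dv.
    + exfalso; case/dvdnP: dv => k Hk.
      have ik : i < k by rewrite -(ltn_pmul2r (ltn0Sn t)); lia.
      have : i.+1 * t.+1 <= k * t.+1 by rewrite leq_mul2r ik orbT.
      rewrite mulSn; lia.
    + by rewrite /S_len inE Hsz orbT.
apply: leq_trans (subset_leq_card sub) _.
apply: leq_trans (leq_card_setU _ _) _.
rewrite leq_add2l; case: ifP => _; first by rewrite cards0.
by rewrite card_S1.
Qed.

Lemma tdc_ins q t : t < q -> tdc t (ins_first t (C_base q t)).
Proof. move=> tq; apply: tdc_intro => x y xI yI s sx sy; exact: ins_ins tq xI yI sx sy. Qed.

Lemma tdc_union q t : t < q -> ~~ (t.+1 %| q) ->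
  tdc t (ins_first t (C_base q t) :|: S_len q 1).
Proof.
move=> tq nd; apply: tdc_intro => x y; rewrite !in_setU => /orP[xI|xS] /orP[yI|yS] s sx sy.
- exact: ins_ins tq xI yI sx sy.
- by case: (ins_S1 tq nd xI yS sx sy).
- by case: (ins_S1 tq nd yI xS sy sx).
- exact: S1_S1 xS yS sx sy.
Qed.

Lemma DEL_le q t n : (forall C : {set PP q}, tdc t C -> #|C| <= n) -> DEL_cor q t <= n.
Proof. move=> H; rewrite /DEL_cor; apply/bigmax_leqP => C; exact: H. Qed.

Lemma DEL_ge q t (C : {set PP q}) : tdc t C -> #|C| <= DEL_cor q t.
Proof. move=> H; rewrite /DEL_cor; exact: (leq_bigmax_cond C H). Qed.

Unset Implicit Arguments. Unset Strict Implicit.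

Theorem mainTheorem10 (q t : nat) :
  1 <= q -> t < q ->
  (t.+1 %| q ->
     [/\ tdc t (ins_first t (C_base q t)),
         DEL_cor q t = #|ins_first t (C_base q t)|
       & #|ins_first t (C_base q t)| = #|C_base q t| ]) /\
  (~~ (t.+1 %| q) ->
     [/\ tdc t (ins_first t (C_base q t) :|: S_len q 1),
         DEL_cor q t = #|ins_first t (C_base q t) :|: S_len q 1|
       & DEL_cor q t = #|C_base q t| + q ]).
Proof.
move=> q1 tq; split => dv.
- have tdcI := tdc_ins tq.
  have cI := card_ins tq.
  split => //.
  apply/eqP; rewrite eqn_leq DEL_ge // andbT.
  apply: DEL_le => C tC; rewrite cI; have := upper tq tC; by rewrite dv addn0.
- have tdcU := tdc_union tq dv.
  have cU : #|ins_first t (C_base q t) :|: S_len q 1| = #|C_base q t| + q.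
    rewrite cardsU (card_ins tq) card_S1.
    have -> : ins_first t (C_base q t) :&: S_len q 1 = set0.
      apply/setP => x; rewrite in_setI in_set0; apply/negP => /andP[xI xS].
      have hb : val x \in ball_del t (val x).
        have := @ball_in _ t (val x) 0 (leq0n t); by rewrite /del_tail min0n drop0.
      exact (ins_S1 tq dv xI xS hb hb).
    by rewrite cards0 subn0.
  have DE : DEL_cor q t = #|ins_first t (C_base q t) :|: S_len q 1|.
    apply/eqP; rewrite eqn_leq DEL_ge // andbT.
    apply: DEL_le => C tC; rewrite cU; have := upper tq tC; by rewrite (negbTE dv).
  by split => //; rewrite DE.
Qed.
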